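(* Let $G=(\mathcal V,\mathcal E,a)$ and $G'=(\mathcal V',\mathcal E',a')$ be finite undirected graphs with discrete node attributes, let $u\in\mathcal V$, $u'\in\mathcal V'$ and $k\ge0$. If $\mathcal M(u,u')\neq\emptyset$, then $$\kappa^{(k+1)}_{\mathrm{subtree}}(u,u')=\delta(a(u),a'(u'))\max_{R\in\mathcal M(u,u')}\prod_{(v,v')\in R}\kappa^{(k)}_{\mathrm{subtree}}(v,v').$$
   Context: $\mathcal N(u)$ denotes the neighbors of $u$; $\delta$ is the Dirac kernel. Weisfeiler–Lehman relabeling: $a_0=a$, and $a_{i}(u)=f\big(a_{i-1}(u),\{\!\{a_{i-1}(v):v\in\mathcal N(u)\}\!\}\big)$ with $f$ an injective relabeling function shared by both graphs (similarly $a'_i$ on $G'$); $\kappa^{(i)}_{\mathrm{subtree}}(u,u')=\delta(a_i(u),a'_i(u'))$. $\mathcal M(u,u')$ is the set of sets $R\subseteq\mathcal N(u)\times\mathcal N(u')$ with $|R|=|\mathcal N(u)|=|\mathcal N(u')|$, such that for all $(v,v'),(w,w')\in R$, $v=w\Leftrightarrow v'=w'$, and $a(v)=a'(v')$ for all $(v,v')\in R$. An empty product equals $1$. *)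

(* Defs.v *)
From mathcomp Require Import all_boot.
From mathcomp Require Import finmap multiset.
Set Implicit Arguments. Unset Strict Implicit. Unset Printing Implicit Defensive.

(* A finite (simple) undirected graph on a finType V: symmetric irreflexive
   adjacency relation e.  Node attributes: a : V -> L (L a choiceType of labels). *)
Definition undirected_graph (V : finType) (e : rel V) :=
  symmetric e /\ irreflexive e.

Definition nbhd (V : finType) (e : rel V) (u : V) : {set V} := [set v | e u v].

Definition nbr_labels (V : finType) (L : choiceType) (e : rel V) (w : V -> L)
  (u : V) : multiset L := seq_mset [seq w v | v <- enum (nbhd e u)].

Fixpoint wl (V : finType) (L : choiceType) (f : L -> multiset L -> L)
  (e : rel V) (a : V -> L) (i : nat) : V -> L :=
  match i with
  | 0 => a
  | i.+1 => fun u => f (wl f e a i u) (nbr_labels e (wl f e a i) u)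
  end.

Definition dirac (L : eqType) (x y : L) : nat := (x == y).

Definition kappa_subtree (V V' : finType) (L : choiceType) (f : L -> multiset L -> L)
  (e : rel V) (a : V -> L) (e' : rel V') (a' : V' -> L) (i : nat) (u : V) (u' : V') : nat :=
  dirac (wl f e a i u) (wl f e' a' i u').

Definition in_M (V V' : finType) (L : eqType) (e : rel V) (a : V -> L)
  (e' : rel V') (a' : V' -> L) (u : V) (u' : V') (R : {set V * V'}) : bool :=
  [&& R \subset setX (nbhd e u) (nbhd e' u'),
      #|R| == #|nbhd e u|, #|R| == #|nbhd e' u'|,
      [forall p in R, forall q in R, (p.1 == q.1) == (p.2 == q.2)] &
      [forall p in R, a p.1 == a' p.2]].

(* Main.v *)
Require Import Defs.
From mathcomp Require Import all_boot.
From mathcomp Require Import finmap multiset.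
Set Implicit Arguments. Unset Strict Implicit.

Definition isbij (V V' : finType) (A : {set V}) (B : {set V'}) (R : {set V * V'}) :=
  [&& R \subset setX A B, #|R| == #|A|, #|R| == #|B| &
      [forall p in R, forall q in R, (p.1 == q.1) == (p.2 == q.2)]].

Lemma build (V V' : finType) (L : eqType) (g : V -> L) (g' : V' -> L) :
  forall (s : seq V) (t : seq V'), uniq s -> uniq t -> perm_eq (map g s) (map g' t) ->
  exists R : {set V * V'}, [/\ R \subset setX [set x in s] [set y in t], #|R| = size s,
     [forall p in R, forall q in R, (p.1 == q.1) == (p.2 == q.2)] &
     [forall p in R, g p.1 == g' p.2]].
Proof.
elim=> [|x s IH] t us ut pst.
  have := perm_size pst; rewrite size_map /=; case: t ut pst => [|y t] // _ _ _.
  exists set0; split; rewrite ?cards0 //; first exact: sub0set.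
  all: try by apply/forallP=> p; rewrite in_set0.
have : g x \in map g' t by rewrite -(perm_mem pst) mem_head.
case/mapP=> y yt gxy.
have pt := perm_to_rem yt.
have pst' : perm_eq (map g s) (map g' (rem y t)).
  rewrite -(perm_cons (g x)); apply: (perm_trans pst).
  by rewrite gxy -map_cons; apply: perm_map.
move: us => /= /andP[xs us].
have ut' : uniq (rem y t) by apply: rem_uniq.
have [R [sR cR bR lR]] := IH _ us ut' pst'.
have xR : (x, y) \notin R.
  apply/negP=> /(subsetP sR); rewrite in_setX /= inE => /andP[]; by rewrite (negbTE xs).
exists ((x, y) |: R); split.
- apply/subsetP=> p; rewrite in_setU1 => /orP[/eqP -> | pR].
    by rewrite in_setX !inE /= eqxx yt.
  case: p pR => p1 p2 pR; move: (subsetP sR _ pR); rewrite !in_setX !inE => /andP[h1 h2].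
  by rewrite h1 orbT (mem_rem h2).
- by rewrite cardsU1 xR cR.
- have key : forall q, q \in R -> (x != q.1) && (y != q.2).
    move=> [q1 q2] qR; move: (subsetP sR _ qR); rewrite in_setX !inE => /andP[h1 h2].
    apply/andP; split; apply/negP => /eqP /= E.
      by move: h1; rewrite -E (negbTE xs).
    by move: h2; rewrite -E (mem_rem_uniqF _ ut).
  apply/forallP=> p; apply/implyP; rewrite in_setU1 => /orP[/eqP -> | pR];
   apply/forallP=> q; apply/implyP; rewrite in_setU1 => /orP[/eqP -> | qR].
  + by rewrite !eqxx.
  + by case/andP: (key q qR) => /negbTE /= -> /negbTE ->.
  + by case/andP: (key p pR) => h1 h2; rewrite /= [p.1 == _]eq_sym [p.2 == _]eq_sym (negbTE h1) (negbTE h2).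
  + by move/forallP: bR => /(_ p); rewrite pR /= => /forallP /(_ q); rewrite qR.
- apply/forallP=> p; apply/implyP; rewrite in_setU1 => /orP[/eqP -> | pR] /=.
    by rewrite gxy.
  by move/forallP: lR => /(_ p); rewrite pR.
Qed.

Lemma proj_perm (V W : finType) (h : V -> W) (R : {set V}) (A : {set W}) :
  h @: R \subset A -> #|R| = #|A| -> {in R &, injective h} ->
  perm_eq (map h (enum R)) (enum A).
Proof.
move=> sub cRA inj.
have eqA : h @: R = A.
  apply/eqP; rewrite eqEcard sub /= card_in_imset // cRA leqnn //.
apply: uniq_perm.
- rewrite map_inj_in_uniq ?enum_uniq // => x y; rewrite !mem_enum; exact: inj.
- exact: enum_uniq.
move=> w; rewrite mem_enum -eqA; apply/mapP/imsetP => [[x]|[x]]; rewrite ?mem_enum => xR ->;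
  by exists x; rewrite ?mem_enum.
Qed.

Lemma Rperm (V V' : finType) (L : eqType) (g : V -> L) (g' : V' -> L)
  (A : {set V}) (B : {set V'}) (R : {set V * V'}) :
  R \subset setX A B -> #|R| = #|A| -> #|R| = #|B| ->
  [forall p in R, forall q in R, (p.1 == q.1) == (p.2 == q.2)] ->
  (forall p, p \in R -> g p.1 = g' p.2) ->
  perm_eq (map g (enum A)) (map g' (enum B)).
Proof.
move=> sR cA cB /forallP bR lR.
have bR' : forall p q, p \in R -> q \in R -> (p.1 == q.1) = (p.2 == q.2).
  move=> p q pR qR; move: (bR p); rewrite pR /= => /forallP /(_ q); rewrite qR.
  by move/eqP.
have p1 : perm_eq (map fst (enum R)) (enum A).
  apply: proj_perm => //.
  - apply/subsetP=> x /imsetP [[y z] pR ->]; move: (subsetP sR _ pR).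
    by rewrite in_setX => /andP[].
  - move=> p q pR qR E; have := E; move/eqP; rewrite bR' // => /eqP E2.
    by move: E E2; case: p q {pR qR} => ? ? [? ?] /= -> ->.
have p2 : perm_eq (map snd (enum R)) (enum B).
  apply: proj_perm => //.
  - apply/subsetP=> x /imsetP [[y z] pR ->]; move: (subsetP sR _ pR).
    by rewrite in_setX => /andP[].
  - move=> p q pR qR E; have := E; move/eqP; rewrite -bR' // => /eqP E2.
    by move: E E2; case: p q {pR qR} => ? ? [? ?] /= -> ->.
have q1 : perm_eq (map g (enum A)) (map g (map fst (enum R))).
  by apply: perm_map; rewrite perm_sym.
have q2 : perm_eq (map g' (map snd (enum R))) (map g' (enum B)) by apply: perm_map.
apply: (perm_trans q1); apply: (perm_trans _ q2).
rewrite -!map_comp (@eq_in_map _ _ (g \o fst) (g' \o snd) (enum R)).1 ?perm_refl //.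
move=> p; rewrite mem_enum => pR /=; exact: lR.
Qed.

Section Main.
Variables (V V' : finType) (L : choiceType) (f : L -> multiset L -> L).
Hypothesis f_inj : forall x y (X Y : multiset L), f x X = f y Y -> x = y /\ X = Y.
Variables (e : rel V) (a : V -> L) (e' : rel V') (a' : V' -> L).

Lemma step j x y : wl f e a j.+1 x = wl f e' a' j.+1 y <->
  wl f e a j x = wl f e' a' j y /\
  nbr_labels e (wl f e a j) x = nbr_labels e' (wl f e' a' j) y.
Proof. by split=> [/f_inj //|[/= -> ->]]. Qed.

Lemma down j x y : wl f e a j x = wl f e' a' j y -> forall i, i <= j ->
  wl f e a i x = wl f e' a' i y.
Proof.
elim: j => [|j IH] H i.
  by rewrite leqn0 => /eqP ->.
rewrite leq_eqVlt => /orP[/eqP -> // | ].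
by rewrite ltnS; apply: IH; case/step: H.
Qed.
End Main.

Theorem lemma1 (V V' : finType) (L : choiceType) (f : L -> multiset L -> L)
  (f_inj : forall x y (X Y : multiset L), f x X = f y Y -> x = y /\ X = Y)
  (e : rel V) (a : V -> L) (e' : rel V') (a' : V' -> L)
  (hG : undirected_graph e) (hG' : undirected_graph e')
  (u : V) (u' : V') (k : nat) :
  (exists R : {set V * V'}, in_M e a e' a' u u' R) ->
  kappa_subtree f e a e' a' k.+1 u u' =
  dirac (a u) (a' u') *
  \max_(R : {set V * V'} | in_M e a e' a' u u' R)
     \prod_(p in R) kappa_subtree f e a e' a' k p.1 p.2.
Proof.
move=> _; rewrite /kappa_subtree /dirac.
have le1 : forall R : {set V * V'},
    \prod_(p in R) nat_of_bool (wl f e a k p.1 == wl f e' a' k p.2) <= 1.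
  move=> R; apply: (big_ind (fun n => n <= 1)) => // [x y hx hy|p _].
    by rewrite -[1]/(1 * 1); apply: leq_mul.
  exact: leq_b1.
case: eqP => [H|H].
- have [Hk Hm] := (step f_inj _ _ _ _ _ _ _).1 H.
  have Ha : a u = a' u' := down f_inj Hk (leq0n k).
  rewrite Ha eqxx mul1n; apply/esym/eqP; rewrite eqn_leq; apply/andP; split.
    by apply/bigmax_leqP => R _; apply: le1.
  move/eq_seq_msetP: Hm => Hp.
  have [R [sR cR bR lR]] := build (enum_uniq _) (enum_uniq _) Hp.
  rewrite !set_enum -cardE in sR cR.
  have cR' : #|R| = #|nbhd e' u'|.
    by rewrite cR !cardE -(size_map (wl f e a k)) (perm_size Hp) size_map.
  apply: (@leq_trans (\prod_(p in R) nat_of_bool (wl f e a k p.1 == wl f e' a' k p.2))).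
    rewrite big1 // => p pR; move/forallP: lR => /(_ p); rewrite pR /= => ->; by [].
  apply: leq_bigmax_cond.
  rewrite /in_M sR -cR' cR !eqxx bR /=.
  apply/forallP=> p; apply/implyP=> pR; move/forallP: lR => /(_ p); rewrite pR /= => /eqP E.
  by have := down f_inj E (leq0n k) => /= ->.
- case: eqP => Ha; last by [].
  rewrite mul1n; apply/esym/eqP; rewrite -leqn0; apply/bigmax_leqP => R inR.
  rewrite leqn0; apply/negP => nz; apply: H.
  have all : forall p, p \in R -> wl f e a k p.1 = wl f e' a' k p.2.
    move=> p pR; apply/eqP; apply/negPn/negP => np; move: nz.
    by rewrite (bigD1 p) //= (negbTE np) mul0n.
  case/and5P: inR => sR /eqP cA /eqP cB bR _.
  suff: forall j, j <= k.+1 -> wl f e a j u = wl f e' a' j u' by apply.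
  elim=> [|j IH] hj; first exact: Ha.
  apply/(step f_inj); split; first by apply: IH; apply: ltnW.
  apply/eq_seq_msetP; apply: (Rperm sR cA cB bR) => p pR.
  exact: (down f_inj (all p pR)).
Qed.
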